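(* Let an instance have $D_i>0$ for all $i\in\mathcal D$, and let $x$ be a minimum cost assignment in which every demand is entirely assigned to exactly one FC: for each $i$ there is a unique $j(i)\in\mathcal F$ with $x_{i\,j(i)}=D_i$ and $x_{ij}=0$ for $j\ne j(i)$. Define the weighted directed graph $\mathcal G_x$ on vertex set $\{r\}\cup\mathcal F\cup\mathcal D$ with: an arc $r\to j$ of weight $0$ for every $j\in\mathcal F$; an arc $j(i)\to i$ of weight $-\ell_{i\,j(i)}$ for every $i\in\mathcal D$; and an arc $i\to j$ of weight $\ell_{ij}$ for every $i\in\mathcal D$ and $j\in\mathcal F$ with $j\ne j(i)$. Then $\mathcal G_x$ has no negative-weight directed cycle. Let $-\beta_j$ (resp. $-\delta_i$) be the minimum weight of a directed path from $r$ to $j$ (resp. to $i$) in $\mathcal G_x$. Then $(x,\beta)$ is an equilibrium solution, $\delta_i=\min_{j}(\ell_{ij}+\beta_j)$ for every $i$, and for every equilibrium solution $(x',\beta')$ with delays $\delta'_i=\min_j(\ell_{ij}+\beta'_j)$ we have $\delta_i\le\delta'_i$ for all $i\in\mathcal D$. In particular $(x,\beta)$ is a minimum-delay equilibrium solution.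
   Context: An instance consists of finite sets $\mathcal D$ (demand nodes) and $\mathcal F$ (FCs), finite nonnegative travel times $\ell_{ij}$, demands $D_i\ge0$ and capacities $C_j\ge0$ with $\sum_iD_i\le\sum_jC_j$. An assignment is $x\in\mathbb R_{\ge0}^{\mathcal D\times\mathcal F}$ with $\sum_jx_{ij}=D_i$ for all $i$ and $\sum_ix_{ij}\le C_j$ for all $j$; a minimum cost assignment minimizes $\sum_{ij}\ell_{ij}x_{ij}$. An equilibrium solution is a pair $(x,\beta)$ with $x$ an assignment and $\beta\in\mathbb R^{\mathcal F}_{\ge0}$ such that $x_{ij}>0$ only if $j\in\arg\min_{j'}(\ell_{ij'}+\beta_{j'})$, and $\beta_j=0$ whenever $\sum_ix_{ij}<C_j$. The delay of demand $i$ is $\delta_i=\min_j(\ell_{ij}+\beta_j)$ and the delay of the solution is $\sum_iD_i\delta_i$. *)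

(* Defs.v *)
From HB Require Import structures.
From mathcomp Require Import all_boot all_order all_algebra.
Set Implicit Arguments. Unset Strict Implicit. Unset Printing Implicit Defensive.
Import Order.TTheory GRing.Theory Num.Theory.
Local Open Scope ring_scope.

Section Defs.
Variables (R : realFieldType) (Dn Fc : finType).
Implicit Types (l : Dn -> Fc -> R) (Dm : Dn -> R) (C : Fc -> R)
  (x : Dn -> Fc -> R) (beta : Fc -> R).

Definition instance l Dm C : Prop :=
  (forall i j, 0 <= l i j) /\ (forall i, 0 <= Dm i) /\ (forall j, 0 <= C j) /\
  \sum_i Dm i <= \sum_j C j.

Definition is_assignment Dm C x : Prop :=
  (forall i j, 0 <= x i j) /\ (forall i, \sum_j x i j = Dm i) /\
  (forall j, \sum_i x i j <= C j).

Definition cost l x : R := \sum_i \sum_j l i j * x i j.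

Definition min_cost_assignment l Dm C x : Prop :=
  is_assignment Dm C x /\ forall y, is_assignment Dm C y -> cost l x <= cost l y.

Definition equilibrium l Dm C x beta : Prop :=
  is_assignment Dm C x /\ (forall j, 0 <= beta j) /\
  (forall i j, 0 < x i j -> forall j', l i j + beta j <= l i j' + beta j') /\
  (forall j, \sum_i x i j < C j -> beta j = 0).

(* minimum over the finite set Fc (default 0 if Fc is empty) *)
Definition fmin (f : Fc -> R) : R :=
  if [pick j : Fc] is Some j0 then \big[Num.min/f j0]_j f j else 0.

Definition delay l beta (i : Dn) : R := fmin (fun j => l i j + beta j).

Definition total_delay l Dm beta : R := \sum_i Dm i * delay l beta i.

(* The graph G_x: vertices r (= None), FCs (Some (inl j)), demands (Some (inr i)).
   garc u v = Some w iff there is an arc u -> v of weight w. *)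
Definition Vtx := option (Fc + Dn)%type.
Definition groot : Vtx := None.
Definition vF (j : Fc) : Vtx := Some (inl j).
Definition vD (i : Dn) : Vtx := Some (inr i).

Definition garc l (jsel : Dn -> Fc) (u v : Vtx) : option R :=
  match u, v with
  | None, Some (inl _) => Some 0
  | Some (inl j), Some (inr i) => if j == jsel i then Some (- l i j) else None
  | Some (inr i), Some (inl j) => if j != jsel i then Some (l i j) else None
  | _, _ => None
  end.

Definition is_arc (g : Vtx -> Vtx -> option R) : rel Vtx :=
  fun u v => g u v != None.

Definition walk_weight (g : Vtx -> Vtx -> option R) (u : Vtx) (p : seq Vtx) : R :=
  \sum_(e <- zip (u :: p) p) odflt 0 (g e.1 e.2).

Definition dpath g (u : Vtx) (p : seq Vtx) (v : Vtx) : Prop :=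
  path (is_arc g) u p /\ last u p = v /\ uniq (u :: p).

Definition dcycle g (u : Vtx) (p : seq Vtx) : Prop :=
  p != [::] /\ path (is_arc g) u p /\ last u p = u /\ uniq p.

Definition no_neg_cycle g : Prop :=
  forall u p, dcycle g u p -> 0 <= walk_weight g u p.

Definition is_min_path_weight g (u v : Vtx) (m : R) : Prop :=
  (exists p, dpath g u p v /\ walk_weight g u p = m) /\
  (forall p, dpath g u p v -> m <= walk_weight g u p).

End Defs.

(* Main.v *)
Require Import Defs.
From HB Require Import structures.
From mathcomp Require Import all_boot all_order all_algebra.
From mathcomp Require Import ring lra.
Import Order.TTheory GRing.Theory Num.Theory.
Set Implicit Arguments. Unset Strict Implicit. Unset Printing Implicit Defensive.
Local Open Scope ring_scope.

Section Generic.
Variables (R : realFieldType) (Dn Fc : finType).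
Implicit Types (g : Vtx Dn Fc -> Vtx Dn Fc -> option R).

Lemma ww_nil g u : walk_weight g u [::] = 0.
Proof. by rewrite /walk_weight big_nil. Qed.

Lemma ww_cons g u v p : walk_weight g u (v :: p) = odflt 0 (g u v) + walk_weight g v p.
Proof. by rewrite /walk_weight /= big_cons. Qed.

Lemma ww_cat g u p1 p2 :
  walk_weight g u (p1 ++ p2) = walk_weight g u p1 + walk_weight g (last u p1) p2.
Proof.
elim: p1 u => [|v p1 IH] u /=; first by rewrite ww_nil add0r.
by rewrite !ww_cons IH addrA.
Qed.

Lemma ww_potential g (phi : Vtx Dn Fc -> R) u p :
  (forall a b, is_arc g a b -> phi b - phi a <= odflt 0 (g a b)) ->
  path (is_arc g) u p -> phi (last u p) - phi u <= walk_weight g u p.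
Proof.
move=> Hphi; elim: p u => [|v p IH] u /=; first by rewrite ww_nil subrr.
move=> /andP [Huv Hp]; rewrite ww_cons.
have := IH v Hp; have := Hphi _ _ Huv; lra.
Qed.

Lemma tele_sum (T : eqType) (u : T) (p : seq T) (w : T) :
  \sum_(e <- zip (u :: p) p) (((e.2 == w)%:R : R) - (e.1 == w)%:R)
  = (last u p == w)%:R - (u == w)%:R.
Proof.
elim: p u => [|v p IH] u /=; first by rewrite big_nil subrr.
rewrite big_cons /= IH; ring.
Qed.

Lemma count_sum (T : eqType) (u : T) (p : seq T) (w : T) :
  \sum_(e <- zip (u :: p) p) ((e.2 == w)%:R : R) = (count_mem w p)%:R.
Proof.
elim: p u => [|v p IH] u /=; first by rewrite big_nil.
by rewrite big_cons /= IH natrD.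
Qed.

Lemma path_zip (T : eqType) (e : rel T) u p :
  path e u p -> forall a, a \in zip (u :: p) p -> e a.1 a.2.
Proof.
elim: p u => [|v p IH] u /=; first by move=> _ a.
move=> /andP [Huv Hp] a.
rewrite in_cons => /orP [/eqP -> //| Ha]; exact: (IH v Hp).
Qed.

End Generic.

Section Perturb.
Variables (R : realFieldType) (Dn Fc : finType) (l : Dn -> Fc -> R) (jsel : Dn -> Fc).
Local Notation G := (garc l jsel).
Local Notation vF := (@vF Dn Fc).
Local Notation vD := (@vD Dn Fc).

Definition dlt (e : Vtx Dn Fc * Vtx Dn Fc) (i : Dn) (j : Fc) : R :=
  match e with
  | (Some (inl j'), Some (inr i')) =>
      if j' == jsel i' then (if (i == i') && (j == j') then -1 else 0) else 0
  | (Some (inr i'), Some (inl j')) =>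
      if j' != jsel i' then (if (i == i') && (j == j') then 1 else 0) else 0
  | _ => 0
  end.

Lemma sum2_ind (c : R) i' j' :
  \sum_i \sum_j l i j * (if (i == i') && (j == j') then c else 0) = l i' j' * c.
Proof.
rewrite (bigD1 i') //= [X in _ + X]big1 ?addr0; last first.
  move=> i /negPf Hi; apply: big1 => j _; by rewrite Hi /= mulr0.
rewrite (bigD1 j') //= !eqxx /= [X in _ + X]big1 ?addr0 //.
by move=> j /negPf Hj; rewrite Hj ?andbF mulr0.
Qed.

Lemma dlt_cost e : \sum_i \sum_j l i j * dlt e i j = odflt 0 (G e.1 e.2).
Proof.
case: e => [[[j'|i']|] [[j2|i2]|]] /=; try by rewrite big1 // => i _; rewrite big1 // => j _; rewrite mulr0.
- case: ifP => _ /=; last by rewrite big1 // => i _; rewrite big1 // => j _; rewrite mulr0.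
  by rewrite sum2_ind mulrN1.
- case: ifP => _ /=; last by rewrite big1 // => i _; rewrite big1 // => j _; rewrite mulr0.
  by rewrite sum2_ind mulr1.
Qed.

Lemma sum1_ind (c : R) (i i' : Dn) (j' : Fc) :
  \sum_j (if (i == i') && (j == j') then c else 0) = (i == i')%:R * c.
Proof.
case: (eqVneq i i') => Hi /=; last by rewrite mul0r big1.
rewrite mul1r (bigD1 j') //= eqxx big1 ?addr0 //.
by move=> j /negPf ->.
Qed.

Lemma sum1_ind' (c : R) (i' : Dn) (j j' : Fc) :
  \sum_i (if (i == i') && (j == j') then c else 0) = (j == j')%:R * c.
Proof.
case: (eqVneq j j') => Hj /=; last by rewrite mul0r big1 // => i _; rewrite andbF.
rewrite mul1r (bigD1 i') //= eqxx big1 ?addr0 //.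
by move=> i /negPf ->.
Qed.

Lemma dlt_row e i : is_arc G e.1 e.2 ->
  \sum_j dlt e i j = (e.1 == vD i)%:R - (e.2 == vD i)%:R.
Proof.
rewrite /is_arc.
case: e => [[[j'|i']|] [[j2|i2]|]] //=.
- case: ifP => // _ _; rewrite sum1_ind /vD; case: (eqVneq i i2) => [->|H];
  rewrite ?eqxx /=; first by rewrite sub0r mul1r.
  have -> : (Some (inr i2) == Some (inr i) :> Vtx Dn Fc) = false.
    by apply/negbTE; apply: contra H => /eqP [->].
  by rewrite mul0r subr0.
- case: ifP => // _ _; rewrite sum1_ind /vD; case: (eqVneq i i') => [->|H];
  rewrite ?eqxx /=; first by rewrite subr0 mul1r.
  have -> : (Some (inr i') == Some (inr i) :> Vtx Dn Fc) = false.
    by apply/negbTE; apply: contra H => /eqP [->].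
  by rewrite mul0r subr0.
- by rewrite big1 // subrr.
Qed.

Lemma dlt_col e j : is_arc G e.1 e.2 ->
  \sum_i dlt e i j <= (e.2 == vF j)%:R - (e.1 == vF j)%:R.
Proof.
rewrite /is_arc.
case: e => [[[j'|i']|] [[j2|i2]|]] //=.
- case: ifP => // _ _; rewrite sum1_ind' /vF; case: (eqVneq j j') => [->|H];
  rewrite ?eqxx /=; first by rewrite sub0r mul1r.
  have -> : (Some (inl j') == Some (inl j) :> Vtx Dn Fc) = false.
    by apply/negbTE; apply: contra H => /eqP [->].
  by rewrite mul0r subr0.
- case: ifP => // _ _; rewrite sum1_ind' /vF; case: (eqVneq j j2) => [->|H];
  rewrite ?eqxx /=; first by rewrite subr0 mul1r.
  have -> : (Some (inl j2) == Some (inl j) :> Vtx Dn Fc) = false.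
    by apply/negbTE; apply: contra H => /eqP [->].
  by rewrite mul0r subr0.
- by move=> _; rewrite big1 // subr0 ler0n.
Qed.

Lemma dlt_ge0 e i j : j != jsel i -> 0 <= dlt e i j.
Proof.
move=> Hj; case: e => [[[j'|i']|] [[j2|i2]|]] //=.
- case: ifP => // /eqP E; case: ifP => // /andP [/eqP Ei /eqP Ej].
  by move: Hj; rewrite Ej E Ei eqxx.
- by case: ifP => //; case: ifP.
Qed.

Lemma dlt_lb e i j : - (e.2 == vD i)%:R <= dlt e i j.
Proof.
case: e => [[[j'|i']|] [[j2|i2]|]] //=; try by rewrite oppr_le0.
- rewrite /vD; have [->|Hi] := eqVneq i i2.
    rewrite eqxx /=; case: ifP => _; [case: ifP => _|];
    by rewrite ?lexx // oppr_le0 ler0n.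
  have -> : (Some (inr i2) == Some (inr i) :> Vtx Dn Fc) = false.
    by apply/negbTE; apply: contra Hi => /eqP [->].
  by rewrite ?(negbTE Hi) /= ?mulr0n oppr0; case: ifP.
- by case: ifP => _; [case: ifP => _|]; rewrite oppr0 ?ler01.
Qed.

End Perturb.

Section Perturb2.
Variables (R : realFieldType) (Dn Fc : finType) (l : Dn -> Fc -> R) (jsel : Dn -> Fc)
  (Dm : Dn -> R) (C : Fc -> R) (x : Dn -> Fc -> R).
Local Notation G := (garc l jsel).
Local Notation vF := (@vF Dn Fc).
Local Notation vD := (@vD Dn Fc).

Lemma perturb :
  is_assignment Dm C x ->
  (forall y, is_assignment Dm C y -> cost l x <= cost l y) ->
  (forall i, x i (jsel i) = Dm i /\ (forall j, j != jsel i -> x i j = 0)) ->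
  forall u p eps,
  path (is_arc G) u p -> uniq p -> 0 < eps -> (forall i, eps <= Dm i) ->
  (forall i, (u == vD i) = (last u p == vD i)) ->
  (forall j, \sum_i x i j + eps * ((last u p == vF j)%:R - (u == vF j)%:R) <= C j) ->
  0 <= walk_weight G u p.
Proof.
move=> [Hx0 [Hrowx Hcolx]] Hmin Hx u p eps Hpath Huniq Heps HepsD Hrow Hcol.
set Z := zip (u :: p) p.
pose D (i : Dn) (j : Fc) := \sum_(e <- Z) @dlt R _ _ jsel e i j.
pose y (i : Dn) (j : Fc) := x i j + eps * D i j.
have Harc : forall a, a \in Z -> is_arc G a.1 a.2 := path_zip Hpath.
have Hy : is_assignment Dm C y.
  split; [|split].
  - move=> i j; rewrite /y; case: (eqVneq j (jsel i)) => [->|Hj].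
    + rewrite (Hx i).1.
      have HD : -1 <= D i (jsel i).
        apply: (@le_trans _ _ (- \sum_(e <- Z) ((e.2 == vD i)%:R : R))).
          rewrite count_sum lerN2 lern1 count_uniq_mem //; exact: leq_b1.
        rewrite -sumrN; apply: ler_sum => e _; exact: dlt_lb.
      have := HepsD i; nra.
    + rewrite ((Hx i).2 j Hj) add0r; apply: mulr_ge0; first exact: ltW.
      by apply: sumr_ge0 => e _; apply: dlt_ge0.
  - move=> i; rewrite /y big_split /= -mulr_sumr /D exchange_big /=.
    have -> : \sum_(e <- Z) \sum_j @dlt R _ _ jsel e i j
            = - \sum_(e <- Z) (((e.2 == vD i)%:R : R) - (e.1 == vD i)%:R).
      rewrite -sumrN big_seq [RHS]big_seq; apply: eq_bigr => e He.
      by rewrite (@dlt_row _ _ _ l jsel e i (Harc e He)) opprB.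
    by rewrite tele_sum -Hrow subrr oppr0 mulr0 addr0 Hrowx.
  - move=> j; rewrite /y big_split /= -mulr_sumr /D exchange_big /=.
    apply: le_trans (Hcol j); rewrite lerD2l; apply: ler_wpM2l; first exact: ltW.
    rewrite -tele_sum big_seq [X in _ <= X]big_seq; apply: ler_sum => e He.
    exact: (@dlt_col _ _ _ l jsel e j (Harc e He)).
have HW : walk_weight G u p = \sum_i \sum_j l i j * D i j.
  rewrite /walk_weight.
  transitivity (\sum_(e <- Z) \sum_i \sum_j l i j * @dlt R _ _ jsel e i j).
    by apply: eq_bigr => e _; rewrite dlt_cost.
  rewrite exchange_big; apply: eq_bigr => i _; rewrite exchange_big.
  by apply: eq_bigr => j _; rewrite /D mulr_sumr.
have Hc : cost l y = cost l x + eps * walk_weight G u p.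
  rewrite HW /cost /y mulr_sumr -big_split; apply: eq_bigr => i _.
  rewrite mulr_sumr -big_split; apply: eq_bigr => j _.
  by rewrite mulrDr mulrCA.
have := Hmin y Hy; rewrite Hc -subr_ge0 addrC addKr.
by rewrite pmulr_rge0.
Qed.

End Perturb2.

Fixpoint allseqs (T : finType) (n : nat) : seq (seq T) :=
  if n is n'.+1 then [::] :: [seq a :: s | a <- enum T, s <- allseqs T n']
  else [:: [::]].

Lemma mem_allseqs (T : finType) n (s : seq T) : (size s <= n)%N -> s \in allseqs T n.
Proof.
elim: n s => [|n IH] [|a s] //=; try by rewrite inE.
move=> Hs; rewrite in_cons; apply/orP; right.
by apply: (allpairs_f (fun a s => a :: s)); [rewrite mem_enum | exact: IH].
Qed.

Section MinSeq.
Variable (R : realFieldType).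

Lemma seq_min (T : eqType) (f : T -> R) (L : seq T) a :
  a \in L -> exists b, b \in L /\ forall c, c \in L -> f b <= f c.
Proof.
elim: L a => [|h L IH] a //.
case: L IH => [|h2 L] IH _.
  by exists h; split; [rewrite inE | move=> c; rewrite inE => /eqP ->].
have [b [Hb Hm]] := IH h2 (mem_head _ _).
case: (lerP (f h) (f b)) => Hhb.
  exists h; split; first exact: mem_head.
  move=> c; rewrite in_cons => /orP [/eqP -> //|Hc].
  exact: le_trans Hhb (Hm c Hc).
exists b; split; first by rewrite in_cons Hb orbT.
move=> c; rewrite in_cons => /orP [/eqP -> |Hc]; [exact: ltW | exact: Hm].
Qed.

Lemma min_path_exists (Dn Fc : finType) (g : Vtx Dn Fc -> Vtx Dn Fc -> option R) u v :
  (exists p, dpath g u p v) -> exists m, is_min_path_weight g u v m.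
Proof.
move=> [p0 Hp0].
pose P (p : seq (option (Fc + Dn)%type)) :=
  [&& path (is_arc g) u p, last u p == v & uniq (u :: p)].
have HP : forall p, dpath g u p v <-> P p.
  move=> p; split; first by move=> [H1 [/eqP H2 H3]]; rewrite /P H1 H2 H3.
  by move=> /and3P [H1 /eqP H2 H3].
pose L := filter P (allseqs _ #|{: option (Fc + Dn)%type}|).
have HL : forall p, dpath g u p v -> p \in L.
  move=> p Hp; rewrite mem_filter; apply/andP; split; first exact/HP.
  apply: mem_allseqs; case: Hp => [_ [_ /= /andP [_ Hu]]].
  by rewrite -(card_uniqP Hu) max_card.
have [b [Hb Hm]] := seq_min (walk_weight g u) (HL _ Hp0).
exists (walk_weight g u b); split.
  exists b; split => //; apply/HP; by move: Hb; rewrite mem_filter => /andP [].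
by move=> p Hp; apply: Hm; exact: HL.
Qed.

Lemma fmin_le (Fc : finType) (f : Fc -> R) j : fmin f <= f j.
Proof.
rewrite /fmin; case: pickP => [j0 _|H]; first exact: bigmin_le.
by have := H j.
Qed.

Lemma fmin_ge (Fc : finType) (f : Fc -> R) c (j0 : Fc) : (forall j, c <= f j) -> c <= fmin f.
Proof.
move=> H; rewrite /fmin; case: pickP => [j1 _|H1]; last by have := H1 j0.
by apply: le_bigmin => // j _.
Qed.

Lemma fmin_eq (Fc : finType) (f : Fc -> R) j0 : (forall j, f j0 <= f j) -> fmin f = f j0.
Proof.
move=> H; apply/le_anti/andP; split; first exact: fmin_le.
exact: (fmin_ge j0).
Qed.

End MinSeq.

Section Main.
Variables (R : realFieldType) (Dn Fc : finType)
  (l : Dn -> Fc -> R) (Dm : Dn -> R) (C : Fc -> R)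
  (x : Dn -> Fc -> R) (jsel : Dn -> Fc).
Hypothesis HD : forall i, 0 < Dm i.
Hypothesis Hmin : min_cost_assignment l Dm C x.
Hypothesis Hx : forall i, x i (jsel i) = Dm i /\ (forall j, j != jsel i -> x i j = 0).
Local Notation G := (garc l jsel).
Local Notation r := (@groot Dn Fc).
Local Notation vF := (@vF Dn Fc).
Local Notation vD := (@vD Dn Fc).

Lemma vF_eq a b : (vF a == vF b) = (a == b).
Proof. by apply/eqP/eqP => [[]|->]. Qed.

Lemma arcD_inv a i : is_arc G a (vD i) -> a = vF (jsel i).
Proof.
rewrite /is_arc; case: a => [[j|i']|] //=.
by case: ifP => // /eqP ->.
Qed.

Lemma G_FD i : G (vF (jsel i)) (vD i) = Some (- l i (jsel i)).
Proof. by rewrite /= eqxx. Qed.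

Lemma G_DF i j : j != jsel i -> G (vD i) (vF j) = Some (l i j).
Proof. by move=> H; rewrite /= H. Qed.

Definition eps0 := \big[Num.min/1]_i Dm i.

Lemma eps0_gt0 : 0 < eps0.
Proof. by apply: lt_bigmin => // i _; exact: HD. Qed.

Lemma eps0_le i : eps0 <= Dm i.
Proof. exact: bigmin_le. Qed.

Lemma no_neg : no_neg_cycle G.
Proof.
case: Hmin => Hasg Hm.
move=> u p [Hne [Hp [Hl Hu]]].
apply: (perturb Hasg Hm Hx Hp Hu eps0_gt0 eps0_le) => [i|j]; rewrite Hl //.
by rewrite subrr mulr0 addr0; case: Hasg => _ [_ ->].
Qed.

Lemma slack_path jt : \sum_i x i jt < C jt ->
  forall p, dpath G r p (vF jt) -> 0 <= walk_weight G r p.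
Proof.
case: Hmin => Hasg Hm.
move=> Hs p [Hp [Hl Hu]].
pose eps := Num.min eps0 (C jt - \sum_i x i jt).
have He : 0 < eps by rewrite lt_min eps0_gt0 subr_gt0 Hs.
have HeD : forall i, eps <= Dm i.
  by move=> i; rewrite ge_min eps0_le.
have HeC : eps <= C jt - \sum_i x i jt by rewrite ge_min lexx orbT.
apply: (perturb Hasg Hm Hx Hp _ He HeD) => [|i|j]; first by case/andP: Hu.
  by rewrite Hl.
rewrite Hl /= subr0 vF_eq; case: (eqVneq jt j) => [<-|Hj] /=.
  by rewrite mulr1; move: HeC; rewrite lerBrDl addrC.
by rewrite mulr0 addr0; case: Hasg => _ [_ ->].
Qed.

Section WithBeta.
Variables (beta : Fc -> R) (delta : Dn -> R).
Hypothesis Hb : forall j, is_min_path_weight G r (vF j) (- beta j).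
Hypothesis Hd : forall i, is_min_path_weight G r (vD i) (- delta i).

Lemma beta_ge0 j : 0 <= beta j.
Proof.
have := (Hb j).2 [:: vF j]; rewrite ww_cons ww_nil /= addr0 oppr_le0; apply.
by split.
Qed.

Lemma notinD p i : dpath G r p (vF (jsel i)) -> vD i \notin p.
Proof.
move=> [Hp [Hl Hu]]; apply/negP => Hin.
case/splitPr: Hin Hp Hl Hu => p1 p2.
rewrite cat_path last_cat /= => /andP [_ /andP [Ha _]] Hl Hu.
have E1 := arcD_inv Ha.
have H1 : vF (jsel i) \in p1.
  by have := mem_last r p1; rewrite E1 in_cons => /orP [/eqP //|].
have H2 : vF (jsel i) \in p2.
  by have := mem_last (vD i) p2; rewrite Hl in_cons => /orP [/eqP //|].
move: Hu; rewrite /= cat_uniq => /andP [_ /and3P [_ /negP H _]]; apply: H.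
by apply/hasP; exists (vF (jsel i)); [rewrite in_cons H2 orbT | exact: H1].
Qed.

Lemma opt_ineq i j' : l i (jsel i) + beta (jsel i) <= l i j' + beta j'.
Proof.
case: (eqVneq j' (jsel i)) => [->//|Hj].
have [[P [HP HwP]] _] := Hb (jsel i).
have HnD := notinD HP.
case: HP => [Hp [Hl Hu]].
case: (boolP (vF j' \in P)) => Hin.
- case/path.splitP: Hin Hp Hl Hu HwP HnD => P1 P2.
  rewrite cat_path rcons_path last_cat last_rcons => /andP [/andP [Hp1 Ha] Hp2] Hl Hu HwP HnD.
  have HQ : - beta j' <= walk_weight G r (rcons P1 (vF j')).
    apply: (Hb j').2; split; first by rewrite rcons_path Hp1 Ha.
    split; first by rewrite last_rcons.
    by move: Hu; rewrite -cat_cons cat_uniq => /andP [].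
  have Hcyc := @no_neg (vF j') (P2 ++ [:: vD i; vF j']).
  have Hw2 : walk_weight G (vF j') (P2 ++ [:: vD i; vF j'])
           = walk_weight G (vF j') P2 - l i (jsel i) + l i j'.
    by rewrite ww_cat Hl !ww_cons ww_nil G_FD (G_DF Hj) /= addr0 addrA.
  have : 0 <= walk_weight G (vF j') (P2 ++ [:: vD i; vF j']).
    apply: Hcyc; split; first by case: P2 {Hp2 Hl Hu HwP HnD Hw2}.
    split; first by rewrite cat_path Hp2 Hl /= /is_arc G_FD (G_DF Hj).
    split; first by rewrite last_cat.
    move: Hu => /= /andP [_]; rewrite cat_uniq => /and3P [_ Hnh HuP2].
    rewrite cat_uniq HuP2 /= andbT.
    have HnF : vF j' \notin P2.
      apply: contra Hnh => H; apply/hasP; exists (vF j') => //.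
      by rewrite mem_rcons mem_head.
    have HnD2 : vD i \notin P2.
      by apply: contra HnD => H; rewrite mem_cat H orbT.
    by rewrite (negbTE HnD2) (negbTE HnF).
  move: HwP; rewrite ww_cat last_rcons Hw2 => HwP.
  lra.
- have : - beta j' <= walk_weight G r (P ++ [:: vD i; vF j']).
    apply: (Hb j').2; split.
      by rewrite cat_path Hp Hl /= /is_arc G_FD (G_DF Hj).
    split; first by rewrite last_cat.
    rewrite -cat_cons cat_uniq Hu /= andbT.
    have HnF : vF j' \notin r :: P by rewrite in_cons negb_or Hin andbT.
    have HnD2 : vD i \notin r :: P by rewrite in_cons negb_or HnD andbT.
    by rewrite (negbTE HnF) (negbTE HnD2).
  rewrite ww_cat Hl !ww_cons ww_nil G_FD (G_DF Hj) /= HwP.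
  lra.
Qed.

Lemma cap j : \sum_i x i j < C j -> beta j = 0.
Proof.
move=> Hs; have [[P [HP HwP]] _] := Hb j.
have := slack_path Hs HP; rewrite HwP oppr_ge0 => H.
by apply/le_anti; rewrite H beta_ge0.
Qed.

Lemma equil : equilibrium l Dm C x beta.
Proof.
case: Hmin => Hasg _.
split => //; split; first exact: beta_ge0.
split; last exact: cap.
move=> i j Hpos j'.
case: (eqVneq j (jsel i)) => [->|Hj]; first exact: opt_ineq.
by move: Hpos; rewrite ((Hx i).2 j Hj) ltxx.
Qed.

Lemma delta_eq i : delta i = beta (jsel i) + l i (jsel i).
Proof.
have [[P [HP HwP]] _] := Hb (jsel i).
have HnD := notinD HP.
case: HP => [Hp [Hl Hu]].
have H1 : - delta i <= - beta (jsel i) - l i (jsel i).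
  have := (Hd i).2 (rcons P (vD i)).
  rewrite -cats1 ww_cat Hl ww_cons ww_nil G_FD /= addr0 HwP; apply.
  split; first by rewrite cats1 rcons_path Hp Hl /is_arc G_FD.
  split; first by rewrite cats1 last_rcons.
  by rewrite cats1 -rcons_cons rcons_uniq Hu in_cons negb_or HnD andbT.
have H2 : - beta (jsel i) - l i (jsel i) <= - delta i.
  have [[p [[Hp' [Hl' Hu']] Hw]] _] := Hd i.
  move: Hp' Hl' Hu' Hw; case/lastP: p => [|p a] //.
  rewrite rcons_path last_rcons => /andP [Hp' Ha] Hl'; subst a.
  have E := arcD_inv Ha.
  rewrite -rcons_cons rcons_uniq => /andP [_ Hu'].
  have Hq : - beta (jsel i) <= walk_weight G r p by apply: (Hb (jsel i)).2.
  rewrite -cats1 ww_cat E ww_cons ww_nil G_FD /= addr0 => Hw.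
  lra.
lra.
Qed.

Lemma delay_eq i : delay l beta i = l i (jsel i) + beta (jsel i).
Proof. by rewrite /delay (fmin_eq (@opt_ineq i)). Qed.

Lemma cs x' b' : equilibrium l Dm C x' b' ->
  forall i j, l i (jsel i) + b' (jsel i) <= l i j + b' j.
Proof.
case: Hmin => Hasg Hm.
move=> Heq; have [[Hx'0 [Hrow' Hcol']] [Hb'0 [Hopt' Hcap']]] := Heq.
have Hasg' : is_assignment Dm C x' by case: Heq.
pose d i := delay l b' i.
have Hd1 i j : d i <= l i j + b' j by apply: fmin_le.
have Hd2 i j : 0 < x' i j -> l i j + b' j = d i.
  by move=> H; rewrite /d /delay (fmin_eq (Hopt' i j H)).
have Hsumx (f : Fc -> R) i : \sum_j f j * x i j = f (jsel i) * Dm i.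
  rewrite (bigD1 (jsel i)) //= (Hx i).1 big1 ?addr0 // => j Hj.
  by rewrite ((Hx i).2 j Hj) mulr0.
have E1 : cost l x = \sum_i l i (jsel i) * Dm i.
  by apply: eq_bigr => i _; rewrite Hsumx.
have E2 : cost l x' = \sum_i d i * Dm i - \sum_j b' j * C j.
  transitivity (\sum_i \sum_j (d i - b' j) * x' i j).
    apply: eq_bigr => i _; apply: eq_bigr => j _.
    have := Hx'0 i j; rewrite le_eqVlt => /orP [/eqP <-|H].
      by rewrite !mulr0.
    by rewrite -(Hd2 i j H) addrK.
  have S1 : \sum_i \sum_j (d i - b' j) * x' i j
           = \sum_i d i * Dm i - \sum_i \sum_j b' j * x' i j.
    rewrite -sumrB; apply: eq_bigr => i _; rewrite -Hrow' mulr_sumr -sumrB.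
    by apply: eq_bigr => j _; rewrite mulrBl.
  have S2 : \sum_i \sum_j b' j * x' i j = \sum_j b' j * C j.
    rewrite exchange_big; apply: eq_bigr => j _; rewrite -mulr_sumr.
    have := Hcol' j; rewrite le_eqVlt => /orP [/eqP -> //| H].
    by rewrite (Hcap' j H) !mul0r.
  by rewrite S1 S2.
have E3 : \sum_i b' (jsel i) * Dm i <= \sum_j b' j * C j.
  rewrite (eq_bigr (fun i => \sum_j b' j * x i j)); last by move=> i _; rewrite Hsumx.
  rewrite exchange_big; apply: ler_sum => j _; rewrite -mulr_sumr.
  by apply: ler_wpM2l; [exact: Hb'0 | case: Hasg => _ [_ ->]].
have Hc : cost l x <= cost l x' := Hm x' Hasg'.
pose s i := l i (jsel i) + b' (jsel i) - d i.
have Hs : \sum_i Dm i * s i = \sum_i l i (jsel i) * Dm i + \sum_i b' (jsel i) * Dm i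
                               - \sum_i d i * Dm i.
  by rewrite -big_split -sumrB; apply: eq_bigr => i _ /=; rewrite /s; ring.
have Hg : forall k, true -> 0 <= Dm k * s k.
  by move=> k _; apply: mulr_ge0; [exact: ltW | rewrite subr_ge0 Hd1].
have Hge : 0 <= \sum_i Dm i * s i by apply: sumr_ge0.
have Hsum0 : \sum_i Dm i * s i = 0.
  by apply/le_anti/andP; split => //; lra.
move=> i j.
have := @psumr_eq0P _ _ _ _ Hg Hsum0 i isT.
move/eqP; rewrite mulf_eq0 (gt_eqF (HD i)) /= => /eqP Hs0.
have := Hd1 i j; rewrite /s in Hs0; lra.
Qed.

Lemma beta_le x' b' : equilibrium l Dm C x' b' -> forall j, beta j <= b' j.
Proof.
move=> Heq j; have [[P [[Hp [Hl _]] HwP]] _] := Hb j.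
have Hb'0 : forall j, 0 <= b' j by case: Heq => _ [].
pose phi (v : Vtx Dn Fc) : R := match v with
  | None => 0
  | Some (inl j) => - b' j
  | Some (inr i) => - (l i (jsel i) + b' (jsel i)) end.
suff Hphi : forall a b, is_arc G a b -> phi b - phi a <= odflt 0 (G a b).
  by have := ww_potential Hphi Hp; rewrite Hl HwP /=; lra.
move=> [[ja|ia]|] [[jb|ib]|]; rewrite /is_arc //=.
- by case: ifP => // /eqP -> _ /=; lra.
- case: ifP => // Hj _ /=; have := cs Heq ia jb; lra.
- by move=> _; have := Hb'0 jb; lra.
Qed.

Lemma third :
  equilibrium l Dm C x beta /\
  (forall i, delta i = delay l beta i) /\
  (forall (x' : Dn -> Fc -> R) (beta' : Fc -> R),
     equilibrium l Dm C x' beta' ->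
     (forall i, delta i <= delay l beta' i) /\
     total_delay l Dm beta <= total_delay l Dm beta').
Proof.
have Hdel i : delta i = delay l beta i by rewrite delay_eq delta_eq addrC.
split; first exact: equil.
split => // x' b' Heq.
have Hle i : delta i <= delay l b' i.
  rewrite delta_eq addrC; apply: (fmin_ge (jsel i)) => j.
  apply: le_trans (opt_ineq i j) _; rewrite lerD2l; exact: beta_le Heq j.
split => //.
apply: ler_sum => i _; apply: ler_wpM2l; first exact: ltW.
by rewrite -Hdel.
Qed.

End WithBeta.
End Main.

Theorem theorem3p4 (R : realFieldType) (Dn Fc : finType)
  (l : Dn -> Fc -> R) (Dm : Dn -> R) (C : Fc -> R)
  (x : Dn -> Fc -> R) (jsel : Dn -> Fc) :
  instance l Dm C ->
  (forall i, 0 < Dm i) ->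
  min_cost_assignment l Dm C x ->
  (forall i, x i (jsel i) = Dm i /\ (forall j, j != jsel i -> x i j = 0)) ->
  no_neg_cycle (garc l jsel) /\
  (exists (beta : Fc -> R) (delta : Dn -> R),
     (forall j, is_min_path_weight (garc l jsel) (@groot Dn Fc) (@vF Dn Fc j) (- beta j)) /\
     (forall i, is_min_path_weight (garc l jsel) (@groot Dn Fc) (@vD Dn Fc i) (- delta i))) /\
  (forall (beta : Fc -> R) (delta : Dn -> R),
     (forall j, is_min_path_weight (garc l jsel) (@groot Dn Fc) (@vF Dn Fc j) (- beta j)) ->
     (forall i, is_min_path_weight (garc l jsel) (@groot Dn Fc) (@vD Dn Fc i) (- delta i)) ->
     equilibrium l Dm C x beta /\
     (forall i, delta i = delay l beta i) /\
     (forall (x' : Dn -> Fc -> R) (beta' : Fc -> R),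
        equilibrium l Dm C x' beta' ->
        (forall i, delta i <= delay l beta' i) /\
        total_delay l Dm beta <= total_delay l Dm beta')).
Proof.
move=> _ HD Hmin Hx.
split; first exact: (no_neg HD Hmin Hx).
split; last by move=> beta delta Hb Hd; exact: (third HD Hmin Hx Hb Hd).
have HF : forall j, exists m, is_min_path_weight (garc l jsel) (@groot Dn Fc) (@vF Dn Fc j) m.
  move=> j; apply: min_path_exists; exists [:: vF Dn j]; by split.
have HDx : forall i, exists m, is_min_path_weight (garc l jsel) (@groot Dn Fc) (@vD Dn Fc i) m.
  move=> i; apply: min_path_exists; exists [:: vF Dn (jsel i); vD Fc i].
  split; first by rewrite /= /is_arc /= eqxx.
  by split.
have [mF HmF] := fin_all_exists HF.
have [mD HmD] := fin_all_exists HDx.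
exists (fun j => - mF j), (fun i => - mD i).
by split => [j|i]; rewrite opprK.
Qed.
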